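(* For every non-negative integer $m$ and for indeterminates $x,y$ (equivalently, for all elements $x,y$ of any commutative ring), \[ (x+y)^{s(m)} \;=\; \sum_{\substack{0\leq k\leq m \\ (k,\,m-k)\ \text{carry-free}}} x^{s(k)}\,y^{s(m-k)} . \]
   Context: For a non-negative integer $k$, $s(k)$ denotes the sum of the digits of the binary representation of $k$ (e.g. $s(3)=2$, $s(0)=0$). A pair $(a,b)$ of non-negative integers is called carry-free if the addition $a+b$ performed in binary involves no carries, i.e. no binary digit position has a $1$ in both $a$ and $b$. *)

(* Defs.v *)
From HB Require Import structures.
From mathcomp Require Import all_boot all_order all_algebra.
Set Implicit Arguments. Unset Strict Implicit. Unset Printing Implicit Defensive.

Definition bit (k i : nat) : bool := odd (k %/ 2 ^ i).

(* s(k): the sum of the binary digits of k.  All digits of weight 2^i with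
   i >= k are zero (since k < 2^k), so summing over i < k.+1 covers them all. *)
Definition s (k : nat) : nat := \sum_(i < k.+1) bit k i.

(* Positions
   i > a carry a 0 in a (a < 2^i), so checking positions i < a.+1 checks all
   binary positions; the boolean form makes it usable as a summation filter. *)
Definition carry_free (a b : nat) : bool := [forall i : 'I_a.+1, ~~ (bit a i && bit b i)].

(* Main.v *)
Require Import Defs.
From HB Require Import structures.
From mathcomp Require Import all_boot all_order all_algebra.
From mathcomp Require Import zify.
Import GRing.Theory.

Lemma bit_small k i : k <= i -> bit k i = false.
Proof.
move=> h; rewrite /bit divn_small //.
apply: (leq_trans (ltn_expl k (ltnSn 1))); exact: leq_pexp2l.
Qed.

Lemma s_wide k N : k < N -> s k = \sum_(i < N) bit k i.
Proof.
move=> h; rewrite /s (big_ord_widen N (fun i => (bit k i : nat))) // big_mkcond.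
apply: eq_bigr => i _; case: ifP => // /negbT; rewrite -leqNgt => hi.
by rewrite bit_small // ltnW.
Qed.

Lemma bit0 (c : bool) j : bit (c + j.*2) 0 = c.
Proof. by rewrite /bit expn0 divn1 oddD odd_double addbF; case: c. Qed.

Lemma bitS (c : bool) j i : bit (c + j.*2) i.+1 = bit j i.
Proof. by rewrite /bit expnS divnMA divn2 half_bit_double. Qed.

Lemma s_cons (c : bool) j : s (c + j.*2) = c + s j.
Proof.
rewrite (@s_wide _ (c + j.*2).+2) // big_ord_recl bit0.
rewrite (@s_wide j (c + j.*2).+1); last by case: c; lia.
congr (_ + _); apply: eq_bigr => i _; by rewrite /= bitS.
Qed.

Lemma cf_all a b : reflect (forall i, ~~ (bit a i && bit b i)) (carry_free a b).
Proof.
apply: (iffP forallP) => H i //.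
case: (ltnP i a.+1) => hi; first exact: (H (Ordinal hi)).
by rewrite bit_small // ltnW.
Qed.

Lemma cf_cons (c : bool) j (d : bool) r :
  carry_free (c + j.*2) (d + r.*2) = ~~ (c && d) && carry_free j r.
Proof.
apply/idP/idP => [/cf_all H | /andP [h1 /cf_all h2]].
  apply/andP; split; first by have := H 0; rewrite !bit0.
  apply/cf_all => i; have := H i.+1; by rewrite !bitS.
apply/cf_all => -[|i]; by rewrite ?bit0 ?bitS.
Qed.

Local Open Scope ring_scope.

Section Ring.
Variables (R : comPzRingType) (x y : R).

Definition F (m k : nat) : R :=
  if (k <= m)%N && carry_free k (m - k) then x ^+ s k * y ^+ s (m - k) else 0.

Lemma target m N : (m < N)%N ->
  \sum_(0 <= k < m.+1 | carry_free k (m - k)) x ^+ s k * y ^+ s (m - k) =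
  \sum_(0 <= k < N) F m k.
Proof.
move=> hN; rewrite big_mkcond /= [RHS](big_cat_nat (n:=m.+1)) //=.
rewrite [X in _ = _ + X]big1_seq ?addr0.
  by apply: eq_big_nat => k /andP[_ hk]; rewrite /F -ltnS hk.
move=> k /andP[_]; rewrite mem_index_iota => /andP[h _].
by rewrite /F leqNgt h.
Qed.

Lemma pair_sum (f : nat -> R) N :
  \sum_(0 <= k < N.*2) f k = \sum_(0 <= j < N) (f j.*2 + f (1 + j.*2)%N).
Proof.
elim: N => [|N IH]; first by rewrite !big_geq.
by rewrite doubleS !big_nat_recr //= IH addrA.
Qed.

Lemma F_cons (b : bool) q (c : bool) j :
  F (b + q.*2) (c + j.*2) =
  if (c <= b)%N then (x ^+ c * y ^+ (b && ~~ c)) * F q j else 0.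
Proof.
case hcb: (c <= b)%N.
  case: (leqP j q) => hjq.
    have e1 : (c + j.*2 <= b + q.*2)%N by move: hcb; case: b; case: c => //= _; lia.
    have e2 : (b + q.*2 - (c + j.*2))%N = ((b && ~~ c) + (q - j).*2)%N.
      by clear e1; move: hcb; case: b; case: c => //= _; lia.
    rewrite /F e1 e2 cf_cons !s_cons hjq /=.
    have -> : ~~ (c && (b && ~~ c)) by clear; case: c; case: b.
case: (carry_free j (q - j)); last by rewrite mulr0.
    by rewrite !exprD mulrACA.
  rewrite /F (_ : (j <= q)%N = false) ?mulr0; last by rewrite leqNgt hjq.
  rewrite ifF //; apply/negbTE; apply/nandP; left; rewrite -ltnNge.
  by move: hcb; case: b; case: c => //= _; lia.
move: hcb; case: c; case: b => // _.
rewrite /F; case: ifP => // /andP[h1 h2]; exfalso.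
have e : (false + q.*2 - (true + j.*2))%N = (true + (q - j).-1.*2)%N.
  by move: h1 => /=; lia.
by move: h2; rewrite e cf_cons.
Qed.

End Ring.

Theorem theorem2 (R : comPzRingType) (m : nat) (x y : R) :
  (x + y) ^+ s m =
  \sum_(0 <= k < m.+1 | carry_free k (m - k)) x ^+ s k * y ^+ s (m - k).
Proof.
elim/ltn_ind: m => m IH.
case: m IH => [|m'] IH.
  rewrite big_mkcond big_nat_recr //= big_geq // add0r subnn.
  have s0 : s 0 = 0%N by rewrite /s big_ord1.
  have -> : carry_free 0 0 by apply/cf_all => i; rewrite bit_small.
  by rewrite s0 !expr0 mulr1.
set m := m'.+1.
have em := odd_double_half m.
set b := odd m in em; set q := m./2 in em.
have hq : (q < m)%N by rewrite /q; lia.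
rewrite (@target R x y m (q.+1.*2)); last by rewrite -em; case: (b); lia.
rewrite pair_sum.
have E0 j : F R x y m j.*2 = y ^+ b * F R x y q j.
  by rewrite -{1}em -[j.*2]/(false + j.*2)%N F_cons /= expr0 mul1r andbT.
have E1 j : F R x y m (1 + j.*2) = if b then x * F R x y q j else 0.
  rewrite -{1}em -[(1 + j.*2)%N]/(true + j.*2)%N F_cons.
  by case: (b) => //=; rewrite expr1 expr0 mulr1.
under eq_bigr => j _ do rewrite E0 E1.
rewrite -{1}em s_cons exprD (IH q hq) (@target R x y q q.+1) // big_distrr /=.
apply: eq_bigr => j _.
case: (b) => /=; rewrite ?expr0 ?expr1 ?mul1r ?mulr1 ?addr0 //.
rewrite mulrDl addrC; reflexivity.
Qed.
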